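(* Let $X\subset\mathbb{R}^d$ and $x\in\partial X$. Then $\operatorname{Tan}(\partial X,x)=\operatorname{Tan}(X,x)\cap\operatorname{Tan}(\mathcal{C}X,x)$.
   Context: $\mathcal{C}X:=\overline{\mathbb{R}^d\setminus X}$ and $\partial X=\overline X\setminus\operatorname{int}X$. For $A\subset\mathbb{R}^d$, the tangent cone $\operatorname{Tan}(A,x)$ is the cone generated by all limits $\lim_n (x_n-x)/\|x_n-x\|$ with $x_n\in A\setminus\{x\}$, $x_n\to x$. *)

(* Defs.v *)
From HB Require Import structures.
From mathcomp Require Import all_boot all_order all_algebra.
From mathcomp Require Import all_classical all_reals all_analysis.
Set Implicit Arguments. Unset Strict Implicit. Unset Printing Implicit Defensive.
Import Order.TTheory GRing.Theory Num.Theory.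
Import numFieldNormedType.Exports.
Local Open Scope classical_set_scope.
Local Open Scope ring_scope.

Section TanCone.
Variables (R : realType) (d : nat).

Definition enorm (v : 'rV[R]_d) : R := Num.sqrt (\sum_(i < d) (v ord0 i) ^+ 2).

Definition compl_cl (X : set 'rV[R]_d) : set 'rV[R]_d := closure (~` X).

Definition bdry (X : set 'rV[R]_d) : set 'rV[R]_d := closure X `\` interior X.

Definition tan_dirs (A : set 'rV[R]_d) (x : 'rV[R]_d) : set 'rV[R]_d :=
  [set u | exists s : nat -> 'rV[R]_d,
     (forall n, A (s n) /\ s n <> x) /\
     (s @ \oo --> x) /\
     ((fun n => (enorm (s n - x))^-1 *: (s n - x)) @ \oo --> u)].

Definition Tan (A : set 'rV[R]_d) (x : 'rV[R]_d) : set 'rV[R]_d :=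
  [set v | v = 0 \/ exists t u, 0 <= t /\ tan_dirs A x u /\ v = t *: u].

End TanCone.

(* Main.v *)
Require Import Defs.
From HB Require Import structures.
From mathcomp Require Import all_boot all_order all_algebra.
From mathcomp Require Import all_classical all_reals all_analysis.
From mathcomp Require Import ring lra.
Set Implicit Arguments. Unset Strict Implicit. Unset Printing Implicit Defensive.
Import Order.TTheory GRing.Theory Num.Theory.
Import numFieldNormedType.Exports.
Local Open Scope classical_set_scope.
Local Open Scope ring_scope.

Section Aux.
Variables (R : realType) (d : nat).
Implicit Types (v w u : 'rV[R]_d).

Definition dir v := (enorm v)^-1 *: v.

Lemma enorm_cont : continuous (@enorm R d).
Proof.
have H : forall s : seq 'I_d, continuous (fun v : 'rV[R]_d => \sum_(i <- s) (v ord0 i) ^+ 2).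
  elim=> [|i s IH].
    have -> : (fun v : 'rV[R]_d => \sum_(i <- [::]) (v ord0 i) ^+ 2) = fun=> 0.
      by apply: funext => w; rewrite big_nil.
    exact: cst_continuous.
  have -> : (fun v : 'rV[R]_d => \sum_(j <- i :: s) (v ord0 j) ^+ 2) =
     (fun v : 'rV[R]_d => (v ord0 i) * (v ord0 i)) + (fun v : 'rV[R]_d => \sum_(j <- s) (v ord0 j) ^+ 2).
    by apply: funext => w; rewrite big_cons expr2.
  move=> v; apply: continuousD; last exact: IH.
  by apply: continuousM; apply: coord_continuous.
move=> v; exact: (continuous_comp (H (index_enum 'I_d) v) (@sqrt_continuous R _)).
Qed.

Lemma enormZ (t : R) v : enorm (t *: v) = `|t| * enorm v.
Proof.
rewrite /enorm.
have -> : \sum_(i < d) ((t *: v) ord0 i) ^+ 2 = t ^+ 2 * \sum_(i < d) (v ord0 i) ^+ 2.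
  rewrite mulr_sumr; apply: eq_bigr => i _; rewrite mxE; ring.
by rewrite sqrtrM ?sqr_ge0 // sqrtr_sqr.
Qed.

Lemma enorm_gt0 v : v != 0 -> 0 < enorm v.
Proof.
move=> vn0; rewrite /enorm sqrtr_gt0.
have [i vi] : exists i, v ord0 i != 0.
  apply: contrapT => H; move/eqP: vn0; apply; apply/rowP => i.
  rewrite mxE; apply/eqP; apply: contrapT => /negP hi; apply: H; by exists i.
rewrite (bigD1 i) //= ltr_pwDl //.
- by rewrite lt_neqAle sqr_ge0 andbT eq_sym sqrf_eq0.
- by apply: sumr_ge0 => j _; rewrite sqr_ge0.
Qed.

Lemma dirZ (t : R) v : 0 < t -> dir (t *: v) = dir v.
Proof.
move=> t0; rewrite /dir enormZ gtr0_norm // scalerA invfM mulrAC mulVf ?mul1r //.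
by rewrite gt_eqF.
Qed.

Lemma enorm_dir v : v != 0 -> enorm (dir v) = 1.
Proof.
move=> vn0; have := enorm_gt0 vn0 => e0.
rewrite /dir enormZ gtr0_norm ?invr_gt0 // mulVf // gt_eqF //.
Qed.

Lemma dir_cont u : enorm u != 0 -> {for u, continuous dir}.
Proof.
move=> u0; apply: continuousZ; last exact: cvg_id.
by apply: continuousV => //; exact: enorm_cont.
Qed.

End Aux.

Section Main.
Variables (R : realType) (d : nat).
Implicit Types (v w u x : 'rV[R]_d) (A X : set 'rV[R]_d).

Lemma tan_norm1 A x u : tan_dirs A x u -> enorm u = 1.
Proof.
case=> s [hs [_ hu]].
have H := cvg_comp _ _ hu (@enorm_cont R d u).
have E : (@enorm R d) \o (fun n => (enorm (s n - x))^-1 *: (s n - x)) = fun=> 1.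
  apply: funext => n /=; apply: (@enorm_dir R d).
  by rewrite subr_eq0; apply/eqP; case: (hs n).
rewrite E in H.
by apply/esym; move/(cvg_lim (@norm_hausdorff _ _)): H => <-; rewrite lim_cst.
Qed.

Lemma tan_mono A X x : A `<=` X -> tan_dirs A x `<=` tan_dirs X x.
Proof.
move=> AX u [s [hs hr]]; exists s; split => // n; case: (hs n) => h1 h2; split => //; exact: AX.
Qed.

Lemma tan_near A x u (s : nat -> 'rV[R]_d) :
  (\forall n \near \oo, A (s n) /\ s n <> x) -> s @ \oo --> x ->
  (fun n => dir (s n - x)) @ \oo --> u -> tan_dirs A x u.
Proof.
case=> N _ HN sx su; exists (fun n => s (n + N)%N); split.
  by move=> n; apply: HN => /=; rewrite leq_addl.
split.
  by rewrite (cvg_shiftn N s).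
by move: su; rewrite -(cvg_shiftn N).
Qed.

End Main.

Section Seg.
Variables (R : realType) (d : nat).
Implicit Types (v w u x a b : 'rV[R]_d) (A X : set 'rV[R]_d).

Lemma seg X a b : closure X a -> closure (~` X) b ->
  exists l : R, 0 <= l <= 1 /\ closure X (a + l *: (b - a)) /\
     closure (~` X) (a + l *: (b - a)).
Proof.
move=> ha hb; apply: contrapT => H.
pose f := fun l : R => a + l *: (b - a).
have fc : continuous f.
  move=> l; rewrite /continuous_at /f; apply: cvgD; first exact: cvg_cst.
  by apply: cvgZr_tmp; exact: cvg_id.
have cf : connected (f @` `[0, 1]).
  apply: connected_continuous_connected; first exact: segment_connected.
  exact: continuous_subspaceT.
pose P := ~` closure (~` X); pose Q := ~` closure X.
have PX : P `<=` X.
  move=> z Pz; apply: contrapT => nz; apply: Pz; exact: subset_closure.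
have QX : Q `<=` ~` X.
  move=> z Qz Xz; apply: Qz; exact: subset_closure.
have sep : separated P Q.
  split; apply/seteqP; split => // z [].
  - by move=> /(closureS PX) cz Qz; exact: Qz cz.
  - by move=> Pz /(closureS QX) cz; exact: Pz cz.
have sub : f @` `[0, 1] `<=` P `|` Q.
  move=> z [l hl <-]; apply: contrapT => nPQ; apply: H; exists l.
  split; first by move: hl; rewrite /= in_itv.
  by split; apply: contrapT => hh; apply: nPQ; [right|left].
case: (connected_subset sep sub cf) => hs.
- have : P (f 1) by apply: hs; exists 1 => //=; rewrite in_itv /= lexx ler01.
  by rewrite /f scale1r addrC subrK.
- have : Q (f 0) by apply: hs; exists 0 => //=; rewrite in_itv /= lexx ler01.
  by rewrite /f scale0r addr0.
Qed.

End Seg.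

Section Clo.
Variables (R : realType) (d : nat).
Implicit Types (v w u x a b : 'rV[R]_d) (A X : set 'rV[R]_d).

Lemma dir_id u : enorm u = 1 -> dir u = u.
Proof. by move=> u1; rewrite /dir u1 invr1 scale1r. Qed.

Lemma tan_closure A x u : tan_dirs (closure A) x u -> tan_dirs A x u.
Proof.
move=> hu0; have u1 := tan_norm1 hu0; case: hu0 => s [hs [sx su]].
have snx n : s n - x != 0 by rewrite subr_eq0; apply/eqP; case: (hs n).
pose m n := `|s n - x|. pose e n := enorm (s n - x).
have m0 n : 0 < m n by rewrite normr_gt0.
have e0 n : 0 < e n by apply: enorm_gt0.
have : forall n, exists y, A y /\ `|s n - y| < Num.min (m n) (e n * m n).
  move=> n; have r0 : 0 < Num.min (m n) (e n * m n) by rewrite lt_min m0 mulr_gt0.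
  case: (hs n) => cl _; have [y [Ay By]] := cl _ (nbhsx_ballx (s n) _ r0).
  by exists y; split => //; move: By; rewrite -ball_normE.
case/choice => y hy.
exists y; split; [move=> n; split; [by case: (hy n)|] | split].
- move=> yx; case: (hy n) => _; rewrite yx lt_min => /andP[+ _].
  by rewrite ltxx.
- apply/cvgrPdist_lt => eps eps0.
  move: (sx) => /cvgrPdist_lt /(_ (eps / 2)); rewrite divr_gt0 // => /(_ isT).
  apply: filterS => n hn.
  have h1 := ler_distD (s n) x (y n).
  case: (hy n) => _; rewrite lt_min => /andP[h2 _].
  move: h2; rewrite /m (distrC (s n) x) => h2; lra.
- have hz : (fun n => (e n)^-1 *: (y n - x)) @ \oo --> u.
    apply/cvgrPdist_lt => eps eps0.
    move: (su) => /cvgrPdist_lt /(_ (eps / 2)); rewrite divr_gt0 // => /(_ isT) h1.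
    move: (sx) => /cvgrPdist_lt /(_ (eps / 2)); rewrite divr_gt0 // => /(_ isT) h2.
    apply: filterS2 h1 h2 => n h1 h2.
    have h3 := ler_distD ((enorm (s n - x))^-1 *: (s n - x)) u ((e n)^-1 *: (y n - x)).
    have E : (enorm (s n - x))^-1 *: (s n - x) - (e n)^-1 *: (y n - x) = (e n)^-1 *: (s n - y n).
      by apply/rowP => i; rewrite !mxE /e; ring.
    rewrite E normrZ ger0_norm ?invr_ge0 ?(ltW (e0 n)) // in h3.
    have h4 : (e n)^-1 * `|s n - y n| < m n.
      case: (hy n) => _; rewrite lt_min => /andP[_ h4].
      by rewrite ltr_pdivrMl // .
    move: h2; rewrite (distrC x (s n)) -/(m n) => h2; lra.
  have hd := cvg_comp _ _ hz (@dir_cont R d u _).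
  rewrite u1 oner_neq0 in hd; have {}hd := hd isT.
  rewrite dir_id // in hd; move: hd; apply: cvg_trans; apply: near_eq_cvg.
  by near=> n; rewrite /= dirZ // invr_gt0.
Unshelve. all: by end_near.
Qed.

End Clo.

Section Bd.
Variables (R : realType) (d : nat).
Implicit Types (v w u x a b : 'rV[R]_d) (A X : set 'rV[R]_d).

Lemma tan_bdry X x u : tan_dirs X x u -> tan_dirs (compl_cl X) x u ->
  tan_dirs (bdry X) x u.
Proof.
move=> ha0 hb0; have u1 := tan_norm1 ha0.
case: ha0 => a [ha [ax au]]; case: hb0 => b [hb [bx bu]].
have : forall n, exists l : R, 0 <= l <= 1 /\ closure X (a n + l *: (b n - a n)) /\
     closure (~` X) (a n + l *: (b n - a n)).
  move=> n; apply: seg; first by apply: subset_closure; case: (ha n).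
  by case: (hb n).
case/choice => l hl.
pose c n := a n + l n *: (b n - a n).
have cb n : bdry X (c n).
  case: (hl n) => _ [h1 h2]; split => // hi.
  by have [z [nz zX]] := h2 X hi.
have anx n : a n - x != 0 by rewrite subr_eq0; apply/eqP; case: (ha n).
have bnx n : b n - x != 0 by rewrite subr_eq0; apply/eqP; case: (hb n).
pose ea n := enorm (a n - x); pose eb n := enorm (b n - x).
have ea0 n : 0 < ea n by apply: enorm_gt0.
have eb0 n : 0 < eb n by apply: enorm_gt0.
pose P n := (1 - l n) * ea n; pose Q n := l n * eb n.
have l01 n : 0 <= l n <= 1 by case: (hl n).
have P0 n : 0 <= P n.
  by have := l01 n; have := ea0 n; rewrite /P => ? /andP[? ?]; nra.
have Q0 n : 0 <= Q n.
  by have := l01 n; have := eb0 n; rewrite /Q => ? /andP[? ?]; nra.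
have PQ0 n : 0 < P n + Q n.
  by have := l01 n; have := ea0 n; have := eb0 n; rewrite /P /Q => ? ? /andP[? ?]; nra.
pose w n := (P n + Q n)^-1 *: (c n - x).
have wE n : u - w n = (P n / (P n + Q n)) *: (u - dir (a n - x)) +
                      (Q n / (P n + Q n)) *: (u - dir (b n - x)).
  have h1 := ea0 n; have h2 := eb0 n; have h3 := PQ0 n.
  rewrite /w /c /dir -/(ea n) -/(eb n); apply/rowP => i; rewrite !mxE.
  rewrite /P /Q in h3 *; field.
  by rewrite !gt_eqF.
have wn n : `|u - w n| <= `|u - dir (a n - x)| + `|u - dir (b n - x)|.
  rewrite wE; apply: le_trans (ler_normD _ _) _; apply: lerD; rewrite normrZ.
  - rewrite ger0_norm ?divr_ge0 ?(ltW (PQ0 n)) //.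
    apply: ler_piMl => //; rewrite ler_pdivrMr // mul1r lerDl //.
  - rewrite ger0_norm ?divr_ge0 ?(ltW (PQ0 n)) //.
    apply: ler_piMl => //; rewrite ler_pdivrMr // mul1r lerDr //.
have wcv : w @ \oo --> u.
  apply/cvgrPdist_lt => eps eps0.
  move: (au) => /cvgrPdist_lt /(_ (eps / 2)); rewrite divr_gt0 // => /(_ isT) h1.
  move: (bu) => /cvgrPdist_lt /(_ (eps / 2)); rewrite divr_gt0 // => /(_ isT) h2.
  apply: filterS2 h1 h2 => n h1 h2; have := wn n; rewrite /dir; lra.
have cx : c @ \oo --> x.
  apply/cvgrPdist_lt => eps eps0.
  move: (ax) => /cvgrPdist_lt /(_ (eps / 2)); rewrite divr_gt0 // => /(_ isT) h1.
  move: (bx) => /cvgrPdist_lt /(_ (eps / 2)); rewrite divr_gt0 // => /(_ isT) h2.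
  apply: filterS2 h1 h2 => n h1 h2.
  have E : x - c n = (1 - l n) *: (x - a n) + l n *: (x - b n).
    by apply/rowP => i; rewrite /c !mxE; ring.
  have := ler_normD ((1 - l n) *: (x - a n)) (l n *: (x - b n)).
  rewrite -E !normrZ !ger0_norm; last 2 first.
  - by case/andP: (l01 n).
  - by case/andP: (l01 n) => _; rewrite subr_ge0.
  move=> h3; have := l01 n; move/andP => [h4 h5].
  have h6 := normr_ge0 (x - a n); have h7 := normr_ge0 (x - b n).
  nra.
have u0 : 0 < `|u|.
  rewrite normr_gt0; apply/eqP => u0; move: u1.
  by rewrite u0 -(scale0r (0 : 'rV[R]_d)) enormZ normr0 mul0r => /eqP; rewrite eq_sym oner_eq0.
apply: (tan_near (s := c)).
- move: (wcv) => /cvgrPdist_lt /(_ _ u0); apply: filterS => n hn.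
  split; first exact: cb.
  by move=> cnx; move: hn; rewrite /w cnx subrr scaler0 subr0 ltxx.
- exact: cx.
- have hd := cvg_comp _ _ wcv (@dir_cont R d u _).
  rewrite u1 oner_neq0 in hd; have {}hd := hd isT.
  rewrite dir_id // in hd; move: hd; apply: cvg_trans; apply: near_eq_cvg.
  by near=> n; rewrite /= /w dirZ // invr_gt0.
Unshelve. all: by end_near.
Qed.

End Bd.

Theorem mainTheorem15 (R : realType) (d : nat) (X : set 'rV[R]_d) (x : 'rV[R]_d)
  (hx : bdry X x) :
  Tan (bdry X) x = Tan X x `&` Tan (compl_cl X) x.
Proof.
apply/seteqP; split => v.
- case => [->|[t [u [t0 [hu ->]]]]]; first by split; left.
  split; right; exists t, u; split => //; split => //.
  + by apply: tan_closure; apply: (tan_mono _ hu) => z [].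
  + apply: (tan_mono _ hu) => z [cz nz].
    apply: contrapT => h; apply: nz.
    have : (~` closure (~` X)) z := h.
    by rewrite -interiorC setCK.
- case => [[->|[t [u [t0 [hu ->]]]]]]; first by left.
  case => [->|[t' [u' [t0' [hu' e]]]]]; first by left.
  have u1 := tan_norm1 hu; have u1' := tan_norm1 hu'.
  have tt : t = t'.
    have := congr1 (@enorm R d) e.
    by rewrite !enormZ u1 u1' !mulr1 !ger0_norm.
  subst t'.
  have [->|tn0] := eqVneq t 0; first by left; rewrite scale0r.
  have uu : u = u' by rewrite -(scalerK tn0 u) e scalerK.
  right; exists t, u; split => //; split => //.
  by apply: tan_bdry => //; rewrite uu.
Qed.
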